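(* Let $q\equiv 3\pmod 4$ be a prime power and let $A$ be a multiplicative subgroup of $\mathbb{F}_q^*$ with $|A|\ge q^{2/3}$. There is an absolute constant $C>0$ such that for all functions $f_1,f_2,f_3,f_4\colon\mathbb{F}_q^2\to[-1,1]$, \[|N(f_1,f_2,f_3,f_4)|\le\min_{1\le j\le 4}\|f_j\|_{\square(V_1\times V_2)}+C\,\frac{q^{1/8}}{|A|^{1/4}}.\]
   Context: Define $\sigma\colon\mathbb{F}_q\to\mathbb{R}$ by $\sigma(x)=q/|A|$ if $x\in A$ and $\sigma(x)=0$ otherwise. Writing points of $\mathbb{F}_q^2=V_1\times V_2$ ($V_1=V_2=\mathbb{F}_q$) as $(a,c)$, define \[N(f_1,f_2,f_3,f_4)=\frac{1}{q^4}\sum_{a,b,c,d\in\mathbb{F}_q}f_1(a,c)f_2(a,d)f_3(b,c)f_4(b,d)\sigma(a-b)\sigma(c-d),\] \[M(f_1,f_2,f_3,f_4)=\frac{1}{q^4}\sum_{a,b,c,d\in\mathbb{F}_q}f_1(a,c)f_2(a,d)f_3(b,c)f_4(b,d),\] and $\|f\|_{\square(V_1\times V_2)}=M(f,f,f,f)^{1/4}$ for $f\colon\mathbb{F}_q^2\to[-1,1]$. *)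

(* Defs.v *)
From HB Require Import structures.
From mathcomp Require Import all_boot all_order all_algebra all_fingroup.
From mathcomp Require Import reals exp Rstruct.
Set Implicit Arguments. Unset Strict Implicit. Unset Printing Implicit Defensive.
Import Order.TTheory GRing.Theory Num.Theory.
Local Open Scope ring_scope.

Notation RR := Rdefinitions.R.

Section Defs.
Variables (F : finFieldType) (A : {group {unit F}}).

Definition Aset : {set F} := [set FinRing.uval u | u in A].

Definition qq : nat := #|F|.

Definition sigma (x : F) : RR :=
  if x \in Aset then (qq%:R / (#|A|)%:R) else 0.

Definition Nform (f1 f2 f3 f4 : F * F -> RR) : RR :=
  (qq%:R ^+ 4)^-1 * \sum_(a : F) \sum_(b : F) \sum_(c : F) \sum_(d : F)
     f1 (a, c) * f2 (a, d) * f3 (b, c) * f4 (b, d) * sigma (a - b) * sigma (c - d).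

Definition Mform (f1 f2 f3 f4 : F * F -> RR) : RR :=
  (qq%:R ^+ 4)^-1 * \sum_(a : F) \sum_(b : F) \sum_(c : F) \sum_(d : F)
     f1 (a, c) * f2 (a, d) * f3 (b, c) * f4 (b, d).

Definition boxnorm (f : F * F -> RR) : RR := powR (Mform f f f f) (4%:R^-1).

End Defs.

(* Main.v *)
Require Import Defs.
From HB Require Import structures.
From mathcomp Require Import all_boot all_order all_algebra all_fingroup all_field.
From mathcomp Require Import reals exp Rstruct complex.
From mathcomp Require Import ring lra.
Import Order.TTheory GRing.Theory Num.Theory.
Local Open Scope ring_scope.

Section Fourier.
Variables (F : finFieldType) (C : numClosedFieldType) (psi : F -> C).
Hypothesis psiD : forall x y, psi (x + y) = psi x * psi y.
Hypothesis psiC : forall x, psi (- x) = (psi x)^*.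
Hypothesis psi0 : psi 0 = 1.
Hypothesis psint : exists y, psi y != 1.
Local Notation q := #|F|.

Lemma orth t : \sum_z psi (z * t) = (t == 0)%:R * q%:R.
Proof.
case: (eqVneq t 0) => [-> | t0].
  under eq_bigr do rewrite mulr0 psi0.
  by rewrite sumr_const mul1r.
case: psint => y hy.
set S := (\sum_z _).
have : S = psi y * S.
  rewrite /S mulr_sumr (reindex_inj (addIr (t^-1 * y))) /=.
  apply eq_bigr => z _; rewrite mulrDl mulrAC mulVf // mul1r psiD mulrC //.
move/eqP; rewrite -subr_eq0 -{1}[S]mul1r -mulrBl mulf_eq0 subr_eq0 eq_sym (negbTE hy) /= => /eqP ->.
by rewrite mul0r.
Qed.

Definition hat (f : F -> C) xi := \sum_x f x * psi (xi * x).

Lemma hat_mul3 f g h xi : hat f xi * hat g (- xi) * hat h xi =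
  \sum_x \sum_a \sum_b f x * g a * h b * psi (xi * (x - a + b)).
Proof.
rewrite /hat -mulrA mulr_suml; apply eq_bigr => x _.
rewrite mulr_suml mulr_sumr; apply eq_bigr => a _.
rewrite mulr_sumr mulr_sumr; apply eq_bigr => b _.
rewrite mulrDr mulrDr psiD psiD mulrN -mulNr.
ring.
Qed.

Lemma keyG f g h : \sum_xi hat f xi * hat g (- xi) * hat h xi =
   q%:R * \sum_a \sum_b f (a - b) * g a * h b.
Proof.
under eq_bigr do rewrite hat_mul3.
rewrite exchange_big /=.
under eq_bigr do rewrite exchange_big /=.
under eq_bigr do under eq_bigr do rewrite exchange_big /=.
under eq_bigr => x _ do under eq_bigr => a _ do under eq_bigr => b _ do
  rewrite -mulr_sumr.
under eq_bigr => x _ do under eq_bigr => a _ do under eq_bigr => b _ do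
  rewrite orth.
rewrite exchange_big /=.
under eq_bigr do rewrite exchange_big /=.
rewrite mulr_sumr; apply eq_bigr => a _.
rewrite mulr_sumr; apply eq_bigr => b _.
rewrite (bigD1 (a - b)) //= big1 => [|x hx].
  have -> : a - b - a + b = 0 by ring.
  by rewrite eqxx addr0 mul1r mulrC.
have -> : (x - a + b == 0) = false.
  apply/negbTE; apply: contra hx => /eqP hh.
  have -> : x = x - a + b + (a - b) by ring.
  by rewrite hh add0r.
by rewrite mul0r mulr0.
Qed.


Lemma orth' t : \sum_z psi (t * z) = (t == 0)%:R * q%:R.
Proof. by under eq_bigr do rewrite mulrC; rewrite orth. Qed.

Lemma hat_conj u xi : (forall x, u x \is Num.real) -> hat u (- xi) = (hat u xi)^*.
Proof.
move=> ur; rewrite /hat rmorph_sum; apply eq_bigr => x _.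
rewrite rmorphM -[RHS]/((u x)^* * (psi (xi * x))^*).
by rewrite conj_Creal // mulNr psiC.
Qed.

Lemma parseval u : (forall x, u x \is Num.real) ->
  \sum_xi `|hat u xi| ^+ 2 = q%:R * \sum_a u a ^+ 2.
Proof.
move=> ur.
under eq_bigr do rewrite normCK -hat_conj //.
have hd xi : hat (fun x => (x == 0)%:R) xi = 1.
  rewrite /hat (bigD1 0) //= big1 ?eqxx ?mul1r ?mulr0 ?psi0 ?addr0 // => x /negbTE ->.
  by rewrite mul0r.
have E : \sum_xi hat u xi * hat u (- xi) =
    \sum_xi hat (fun x => (x == 0)%:R) xi * hat u (- xi) * hat u xi.
  by apply eq_bigr => xi _; rewrite hd mul1r mulrC.
rewrite E keyG; congr (_ * _); apply eq_bigr => a _.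
rewrite (bigD1 a) //= subrr eqxx mul1r big1 ?addr0 ?expr2 // => b hb.
by rewrite subr_eq0 eq_sym (negbTE hb) !mul0r.
Qed.

Variable S : {set F}.
Hypothesis S0 : 0 \notin S.
Hypothesis mulS : forall t x, t \in S -> x \in S -> t * x \in S.
Hypothesis invS : forall t, t \in S -> t^-1 \in S.
Hypothesis Sn : (0 < #|S|)%N.
Local Notation n := #|S|.
Definition W x : C := (x \in S)%:R - n%:R / q%:R.

Lemma q0 : (0 < q)%N.
Proof. by apply/card_gt0P; exists 0. Qed.

Lemma qC0 : q%:R != 0 :> C.
Proof. by rewrite pnatr_eq0 -lt0n q0. Qed.

Lemma sum_ind (g : F -> C) : \sum_x (x \in S)%:R * g x = \sum_(x in S) g x.
Proof.
rewrite [RHS]big_mkcond; apply eq_bigr => x _.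
by case: (x \in S); rewrite ?mul1r ?mul0r.
Qed.

Lemma sum_ind1 : \sum_x ((x \in S)%:R : C) = n%:R.
Proof.
under eq_bigr do rewrite -[(_ \in S)%:R]mulr1.
by rewrite sum_ind sumr_const.
Qed.

Lemma hatW0 : hat W 0 = 0.
Proof.
rewrite /hat; under eq_bigr do rewrite mul0r psi0 mulr1.
rewrite /W sumrB sum_ind1 sumr_const -mulr_natr.
have -> : #|(xpredT : pred F)| = q by [].
by rewrite -[X in _ - X]mulr_natr divfK ?qC0 ?subrr.
Qed.

Lemma hatW xi : xi != 0 -> hat W xi = \sum_(x in S) psi (xi * x).
Proof.
move=> xi0; rewrite /hat /W; under eq_bigr do rewrite mulrBl.
by rewrite sumrB sum_ind -mulr_sumr orth' (negbTE xi0) mul0r mulr0 subr0.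
Qed.

Lemma hatW_inv t xi : t \in S -> xi != 0 -> hat W (t * xi) = hat W xi.
Proof.
move=> tS xi0.
have t0 : t != 0 by apply: contraNneq S0 => <-.
rewrite !hatW ?mulf_neq0 //.
symmetry; rewrite (reindex_inj (mulfI t0)) /=.
apply: eq_big => x.
  apply/idP/idP => [h|h]; last exact: mulS.
  by have := mulS _ _ (invS _ tS) h; rewrite mulKf.
by rewrite mulrCA mulrA.
Qed.

Lemma Wreal x : W x \is Num.real.
Proof. by rewrite /W rpredB ?rpredM ?rpredV ?realn. Qed.

Lemma sumW2 : \sum_x W x ^+ 2 <= n%:R.
Proof.
set al : C := n%:R / q%:R.
have e x : W x ^+ 2 = (x \in S)%:R * (1 - al *+ 2) + al ^+ 2.
  by rewrite /W -/al; case: (x \in S) => /=; ring.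
under eq_bigr do rewrite e.
rewrite big_split /= sum_ind !sumr_const.
have -> : (1 - al *+ 2) *+ n + al ^+ 2 *+ #|(xpredT : pred F)| = n%:R - n%:R * al.
  rewrite -[_ *+ n]mulr_natr -[_ *+ #|(xpredT : pred F)|]mulr_natr.
  change #|(xpredT : pred F)| with q.
  rewrite /al; field; exact: qC0.
by rewrite gerBl mulr_ge0 ?divr_ge0 ?ler0n.
Qed.

Lemma sub_sum (g : F -> C) : (forall x, 0 <= g x) -> \sum_(x in S) g x <= \sum_x g x.
Proof.
move=> g0; rewrite [X in _ <= X](bigID (mem S)) /= lerDl sumr_ge0 //.
Qed.

Lemma hatW_bound xi : `|hat W xi| ^+ 2 <= q%:R.
Proof.
case: (eqVneq xi 0) => [->|xi0]; first by rewrite hatW0 normr0 expr0n ler0n.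
have nC : 0 < n%:R :> C by rewrite ltr0n.
rewrite -(ler_pM2l nC).
have -> : n%:R * `|hat W xi| ^+ 2 = \sum_(t in S) `|hat W (t * xi)| ^+ 2.
  by rewrite (eq_bigr (fun _ => `|hat W xi| ^+ 2)) ?sumr_const ?mulr_natl // => t tS; rewrite hatW_inv.
apply: le_trans (sub_sum _ _) _ => [x|]; first by rewrite exprn_ge0.
have -> : \sum_t `|hat W (t * xi)| ^+ 2 = \sum_t `|hat W t| ^+ 2.
  by rewrite [RHS](reindex_inj (mulIf xi0)).
rewrite parseval; last exact: Wreal.
rewrite mulrC ler_pM2r ?ltr0n ?q0 //; exact: sumW2.
Qed.

Lemma amgm (x y : C) : (`|x| * `|y|) *+ 2 <= `|x| ^+ 2 + `|y| ^+ 2.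
Proof.
rewrite -subr_ge0.
have -> : `|x| ^+ 2 + `|y| ^+ 2 - (`|x| * `|y|) *+ 2 = (`|x| - `|y|) ^+ 2 by ring.
by rewrite -real_normK ?exprn_ge0 ?normr_ge0 // realB ?normr_real.
Qed.

Lemma spectral (s : C) (u v : F -> C) : 0 <= s -> s ^+ 2 = q%:R ->
  (forall x, u x \is Num.real) -> (forall x, v x \is Num.real) ->
  `|\sum_a \sum_b W (a - b) * u a * v b| *+ 2 <=
     s * (\sum_a u a ^+ 2 + \sum_b v b ^+ 2).
Proof.
move=> s0 s2 ur vr.
have qp : 0 < q%:R :> C by rewrite ltr0n q0.
rewrite -(ler_pM2l qp) mulrnAr.
rewrite -{1}(@ger0_norm _ q%:R) ?ler0n // -normrM -keyG.
apply: (@le_trans _ _ ((\sum_xi `|hat W xi * hat u (- xi) * hat v xi|) *+ 2)).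
  by rewrite lerMn2r ler_norm_sum orbT.
rewrite -sumrMnl.
apply: (@le_trans _ _ (\sum_xi s * (`|hat u (- xi)| ^+ 2 + `|hat v xi| ^+ 2))).
  apply: ler_sum => xi _; rewrite !normrM -mulrA -mulrnAr.
  apply: ler_pM; rewrite ?normr_ge0 ?mulrn_wge0 ?mulr_ge0 ?normr_ge0 //.
    have := hatW_bound xi; rewrite -s2 ler_sqr //; by rewrite nnegrE ?normr_ge0.
  exact: amgm.
rewrite -mulr_sumr big_split /=.
have -> : \sum_xi `|hat u (- xi)| ^+ 2 = \sum_xi `|hat u xi| ^+ 2.
  by rewrite [RHS](reindex_inj oppr_inj).
rewrite !parseval //.
by rewrite -mulrDr mulrCA.
Qed.

End Fourier.

Module CharEx.
Import VectorInternalTheory.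
Lemma exists_char (F : finFieldType) (C : numClosedFieldType) :
  exists psi : F -> C, [/\ forall x y, psi (x + y) = psi x * psi y,
     forall x, psi (- x) = (psi x)^*, psi 0 = 1 & exists y, psi y != 1].
Proof.

have [p pr_p pchp] := finPcharP F.
pose R := pPrimeCharType pchp.
have p2 : (1 < p)%N by apply: prime_gt1.
have [w rw] : exists w : C, root (\poly_(i < p) (1 : C)) w.
  by apply/closed_rootP; rewrite size_poly_eq ?oner_neq0 //; case: p p2 {pr_p pchp R}=> [|[|]].
have wp : w ^+ p = 1.
  apply/eqP; rewrite -subr_eq0 subrX1; move: rw; rewrite /root horner_poly.
  by under eq_bigr do rewrite mul1r; move/eqP->; rewrite mulr0.
have w1 : w != 1.
  apply/eqP=> w1; move: rw; rewrite /root horner_poly w1.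
  under eq_bigr do rewrite expr1n mulr1.
  by rewrite sumr_const card_ord pnatr_eq0; case: p p2 {pr_p pchp R wp}.
have v1 : v2r (1 : R) != 0.
  by apply/negP=> /eqP h; move: (oner_neq0 R); rewrite -(raddf0 v2r) in h; rewrite (v2r_inj h) eqxx.
case: (pickP (fun i => v2r (1 : R) 0 i != 0)) => [i hi | h]; last first.
  by case/negP: v1; apply/eqP/rowP=> j; rewrite !mxE; move: (h j) => /negbFE/eqP.
pose phi (x : F) : 'F_p := v2r (x : R) 0 i.
pose psi (x : F) : C := w ^+ (phi x : nat).
have phiD x y : phi (x + y) = phi x + phi y by rewrite /phi linearD mxE.
have psiD x y : psi (x + y) = psi x * psi y.
  have wp' : w ^+ (Zp_trunc (pdiv p)).+2 = 1 by rewrite Fp_cast.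
  by rewrite /psi phiD /= expr_mod // exprD.
have psi0 : psi 0 = 1.
  by rewrite /psi /phi (linear0 v2r) mxE expr0.
have psiN x : psi (- x) * psi x = 1 by rewrite -psiD addNr psi0.
have npsi x : `|psi x| = 1.
  apply/eqP; rewrite -(pexpr_eq1 (n := p)) ?normr_ge0 ?prime_gt0 //.
  by rewrite -normrX /psi -exprM mulnC exprM wp expr1n normr1.
exists psi; split => //.
  move=> x; have h := normCK (psi x); rewrite npsi expr1n in h.
  by rewrite -[(psi x)^*]mul1r -(psiN x) -mulrA -h mulr1.
exists ((phi 1)^-1 *: (1 : R)).
have hphi : phi ((phi 1)^-1 *: (1 : R)) = 1.
  by rewrite /phi linearZ mxE mulVf.
by rewrite /psi hphi /= modn_small // expr1.
Qed.

End CharEx.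
Import CharEx.

Set Implicit Arguments. Unset Strict Implicit.

Section RRpart.
Variables (F : finFieldType) (A : {group {unit F}}).
Local Notation S := (Aset A).
Local Notation q := #|F|.

Definition WR (x : F) : RR := (x \in S)%:R - #|S|%:R / q%:R.

Lemma AS0 : 0 \notin S.
Proof.
apply/imsetP => -[u _ h]; have := valP u.
by rewrite /= -h unitr0.
Qed.

Lemma AmulS t x : t \in S -> x \in S -> t * x \in S.
Proof.
case/imsetP => t' tA ->; case/imsetP => x' xA ->.
by apply/imsetP; exists (t' * x')%g; rewrite ?groupM.
Qed.

Lemma AinvS t : t \in S -> t^-1 \in S.
Proof.
case/imsetP => t' tA ->.
by apply/imsetP; exists (t'^-1)%g; rewrite ?groupV.
Qed.

Lemma cardS : #|S| = #|A|.
Proof. by rewrite card_imset //; exact: val_inj. Qed.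

Lemma ASn : (0 < #|S|)%N.
Proof. by rewrite cardS cardG_gt0. Qed.

Local Open Scope complex_scope.

Lemma normCR (x : RR) : `|x%:C| = `|x|%:C.
Proof. by rewrite normc_def /= expr0n /= addr0 sqrtr_sqr. Qed.

Lemma specR (u v : F -> RR) :
  `|\sum_a \sum_b WR (a - b) * u a * v b| *+ 2 <=
     Num.sqrt (q%:R : RR) * (\sum_a u a ^+ 2 + \sum_b v b ^+ 2).
Proof.
have [psi [psiD psiC psi0 psint]] := exists_char F (RR[i]).
have hs0 : 0 <= (Num.sqrt (q%:R : RR))%:C by rewrite ler0c sqrtr_ge0.
have hs2 : ((Num.sqrt (q%:R : RR))%:C) ^+ 2 = q%:R.
  by rewrite -rmorphXn sqr_sqrtr ?ler0n // rmorph_nat.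
have rr (w : F -> RR) x : (w x)%:C \is Num.real by rewrite complex_real.
have := @spectral F RR[i] psi psiD psiC psi0 psint S AS0 AmulS AinvS ASn _ _ _ hs0 hs2 (rr u) (rr v).
have WC x : W F RR[i] S x = (WR x)%:C.
  by rewrite /W /WR rmorphB rmorph_nat fmorph_div !rmorph_nat.
have -> : \sum_a \sum_b W F RR[i] S (a - b) * (u a)%:C * (v b)%:C =
    (\sum_a \sum_b WR (a - b) * u a * v b)%:C.
  rewrite rmorph_sum; apply eq_bigr => a _; rewrite rmorph_sum; apply eq_bigr => b _.
  by rewrite !rmorphM WC.
have -> : \sum_a (u a)%:C ^+ 2 + \sum_b (v b)%:C ^+ 2 =
    (\sum_a u a ^+ 2 + \sum_b v b ^+ 2)%:C.
  rewrite rmorphD !rmorph_sum; congr (_ + _); apply eq_bigr => a _; by rewrite rmorphXn.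
by rewrite normCR -rmorphMn -rmorphM lecR.
Qed.

End RRpart.

Lemma sum_mul (I J : finType) (a : I -> RR) (b : J -> RR) :
  (\sum_i a i) * (\sum_j b j) = \sum_i \sum_j a i * b j.
Proof. rewrite mulr_suml; apply eq_bigr => i _; by rewrite mulr_sumr. Qed.

Lemma CS (I : finType) (x y : I -> RR) :
  (\sum_i x i * y i) ^+ 2 <= (\sum_i x i ^+ 2) * (\sum_i y i ^+ 2).
Proof.
have h0 : 0 <= \sum_i \sum_j (x i * y j - x j * y i) ^+ 2.
  by apply: sumr_ge0 => i _; apply: sumr_ge0 => j _; apply: sqr_ge0.
have e : \sum_i \sum_j (x i * y j - x j * y i) ^+ 2 =
   (\sum_i \sum_j x i ^+ 2 * y j ^+ 2) + (\sum_i \sum_j y i ^+ 2 * x j ^+ 2)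
   - (\sum_i \sum_j (x i * y i) * (x j * y j)) *+ 2.
  rewrite -sumrMnl -big_split -sumrB; apply eq_bigr => i _.
  rewrite -sumrMnl -big_split -sumrB; apply eq_bigr => j _.
  rewrite /=; ring.
rewrite e -!sum_mul -expr2 in h0.
set X := \sum_i x i ^+ 2 in h0 *; set Y := \sum_i y i ^+ 2 in h0 *.
set Z := \sum_i x i * y i in h0 *.
move: h0; rewrite [Y * X]mulrC; set XY := X * Y; set Z2 := Z ^+ 2; lra.
Qed.

Lemma CS2 (I J : finType) (x y : I -> J -> RR) :
  (\sum_i \sum_j x i j * y i j) ^+ 2 <=
     (\sum_i \sum_j x i j ^+ 2) * (\sum_i \sum_j y i j ^+ 2).
Proof.
have sp (G : I -> J -> RR) : \sum_i \sum_j G i j = \sum_(p : I * J) G p.1 p.2.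
  by rewrite pair_bigA.
rewrite (sp (fun i j => x i j * y i j)) (sp (fun i j => x i j ^+ 2)) (sp (fun i j => y i j ^+ 2)).
exact: CS.
Qed.

Lemma swap4 (F : finType) (G : F -> F -> F -> F -> RR) :
  \sum_a \sum_b \sum_c \sum_d G a b c d = \sum_c \sum_d \sum_a \sum_b G a b c d.
Proof.
under eq_bigr => a _ do rewrite exchange_big.
under eq_bigr => a _ do under eq_bigr => c _ do rewrite exchange_big.
rewrite exchange_big.
by under eq_bigr => c _ do rewrite exchange_big.
Qed.

Section Count.
Variables (F : finFieldType) (A : {group {unit F}}).
Local Notation q := (#|F|%:R : RR).
Local Notation n := (#|A|%:R : RR).

Lemma qpos : 0 < q.
Proof. by rewrite ltr0n; apply/card_gt0P; exists 0. Qed.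

Lemma npos : 0 < n.
Proof. by rewrite ltr0n cardG_gt0. Qed.

Lemma sigE x : sigma A x = 1 + q / n * WR A x.
Proof.
have q0 := qpos; have n0 := npos.
rewrite /sigma /WR /qq cardS; case: (x \in Aset A) => /=; field; lra.
Qed.

Lemma sig_ge0 x : 0 <= sigma A x.
Proof.
rewrite /sigma; case: ifP => // _; apply: divr_ge0; exact: ler0n.
Qed.

Lemma sumsig a : \sum_b sigma A (a - b) = q.
Proof.
rewrite (reindex_inj (inv_inj (subKr a))) /=.
under eq_bigr do rewrite subKr.
rewrite /sigma -big_mkcond /= sumr_const cardS /qq.
by rewrite -[LHS]mulr_natr divfK // lt0r_neq0 // npos.
Qed.

Lemma sumsig2 : \sum_a \sum_b sigma A (a - b) = q ^+ 2.
Proof.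
under eq_bigr do rewrite sumsig.
by rewrite sumr_const -[LHS]mulr_natr expr2.
Qed.

Lemma sumsq (u : F -> RR) : (forall x, -1 <= u x <= 1) -> \sum_a u a ^+ 2 <= q.
Proof.
move=> hu.
apply: (@le_trans _ _ (\sum_(a : F) (1 : RR))).
  apply: ler_sum => a _; have := hu a; nra.
by rewrite sumr_const.
Qed.

Lemma bilin (u v : F -> RR) : (forall x, -1 <= u x <= 1) -> (forall x, -1 <= v x <= 1) ->
  `|\sum_a \sum_b WR A (a - b) * u a * v b| <= Num.sqrt q * q.
Proof.
move=> hu hv.
have h := specR A u v.
have h2 : Num.sqrt q * (\sum_a u a ^+ 2 + \sum_b v b ^+ 2) <= (Num.sqrt q * q) *+ 2.
  rewrite mulr2n -mulrDr; apply: ler_wpM2l; first exact: sqrtr_ge0.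
  by apply: lerD; apply: sumsq.
have := le_trans h h2; by rewrite lerMn2r.
Qed.

End Count.

Lemma prod_bd (x y : RR) : -1 <= x <= 1 -> -1 <= y <= 1 -> -1 <= x * y <= 1.
Proof. by move=> /andP[? ?] /andP[? ?]; apply/andP; split; nra. Qed.

Lemma bd_norm (x : RR) : -1 <= x <= 1 -> `|x| <= 1.
Proof. by move=> h; rewrite ler_norml. Qed.

Lemma sq_le (x K : RR) : `|x| <= K -> x ^+ 2 <= K ^+ 2.
Proof.
move=> h; rewrite -(real_normK (num_real x)); have := normr_ge0 x.
set y := `|x| in h *; nra.
Qed.

Section Count2.
Variables (F : finFieldType) (A : {group {unit F}}).
Local Notation q := (#|F|%:R : RR).
Local Notation n := (#|A|%:R : RR).

Lemma sum2c (K : RR) : \sum_(c : F) \sum_(d : F) K = q ^+ 2 * K.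
Proof.
under eq_bigr do rewrite sumr_const.
rewrite sumr_const -mulrnA -[LHS]mulr_natl natrM expr2 //.
Qed.

Lemma sumbd (g : F -> RR) : (forall x, `|g x| <= 1) -> `|\sum_x g x| <= q.
Proof.
move=> h; apply: le_trans (ler_norm_sum _ _ _) _.
apply: (@le_trans _ _ (\sum_(x : F) (1 : RR))); first exact: ler_sum.
by rewrite sumr_const.
Qed.

Variables f1 f2 f3 f4 : F * F -> RR.
Hypothesis h1 : forall x, -1 <= f1 x <= 1.
Hypothesis h2 : forall x, -1 <= f2 x <= 1.
Hypothesis h3 : forall x, -1 <= f3 x <= 1.
Hypothesis h4 : forall x, -1 <= f4 x <= 1.

Lemma NM_close :
  `|Nform A f1 f2 f3 f4 - Mform f1 f2 f3 f4| <= (Num.sqrt q / n) *+ 2.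
Proof.
have q0 := qpos F; have n0 := npos A.
set s := Num.sqrt q.
have E : \sum_a \sum_b \sum_c \sum_d f1 (a, c) * f2 (a, d) * f3 (b, c) * f4 (b, d)
      * sigma A (a - b) * sigma A (c - d)
   - \sum_a \sum_b \sum_c \sum_d f1 (a, c) * f2 (a, d) * f3 (b, c) * f4 (b, d) =
   q / n * (\sum_a \sum_b \sum_c \sum_d WR A (a - b) *
       (f1 (a, c) * f2 (a, d) * f3 (b, c) * f4 (b, d)))
   + q / n * (\sum_a \sum_b \sum_c \sum_d sigma A (a - b) *
       (WR A (c - d) * (f1 (a, c) * f3 (b, c)) * (f2 (a, d) * f4 (b, d)))).
  idtac.
  do 4 (rewrite -sumrB ?mulr_sumr -big_split /=; apply eq_bigr => ? _).
  rewrite !sigE; ring.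
have E2 : `|\sum_a \sum_b \sum_c \sum_d WR A (a - b) *
       (f1 (a, c) * f2 (a, d) * f3 (b, c) * f4 (b, d))| <= q ^+ 2 * (s * q).
  rewrite swap4 -sum2c.
  apply: le_trans (ler_norm_sum _ _ _) _.
  apply: ler_sum => c _; apply: le_trans (ler_norm_sum _ _ _) _; apply: ler_sum => d _.
  have -> : \sum_a \sum_b WR A (a - b) * (f1 (a, c) * f2 (a, d) * f3 (b, c) * f4 (b, d))
     = \sum_a \sum_b WR A (a - b) * (f1 (a, c) * f2 (a, d)) * (f3 (b, c) * f4 (b, d)).
    by apply eq_bigr => a _; apply eq_bigr => b _; ring.
  by apply: bilin => x; apply: prod_bd.
have E1 : `|\sum_a \sum_b \sum_c \sum_d sigma A (a - b) *
       (WR A (c - d) * (f1 (a, c) * f3 (b, c)) * (f2 (a, d) * f4 (b, d)))|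
       <= q ^+ 2 * (s * q).
  apply: le_trans (ler_norm_sum _ _ _) _.
  apply: (@le_trans _ _ (\sum_a \sum_b sigma A (a - b) * (s * q))); last first.
    by under eq_bigr do rewrite -mulr_suml; rewrite -mulr_suml sumsig2.
  apply: ler_sum => a _; apply: le_trans (ler_norm_sum _ _ _) _; apply: ler_sum => b _.
  under eq_bigr do rewrite -mulr_sumr; rewrite -mulr_sumr normrM ger0_norm ?sig_ge0 //.
  apply: ler_wpM2l; first exact: sig_ge0.
  by apply: bilin => x; apply: prod_bd.
rewrite /Nform /Mform /qq -mulrBr E normrM ger0_norm; last first.
  by rewrite invr_ge0 exprn_ge0 // ltW.
set e2 := \sum_a _ in E2 *; set e1 := \sum_a _ in E1 *.
apply: le_trans (ler_wpM2l _ (ler_normD _ _)) _; first by rewrite invr_ge0 exprn_ge0 // ltW.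
rewrite !normrM (ger0_norm (ltW q0)) (@ger0_norm _ n^-1) ?invr_ge0 ?ler0n //.
have c0 : 0 <= (q ^+ 4)^-1 * (q / n).
  by rewrite mulr_ge0 ?invr_ge0 ?exprn_ge0 ?divr_ge0 // ltW.
have -> : (q ^+ 4)^-1 * (q / n * `|e2| + q / n * `|e1|) =
   ((q ^+ 4)^-1 * (q / n)) * (`|e2| + `|e1|) by ring.
apply: le_trans (ler_wpM2l c0 (lerD E2 E1)) _.
rewrite le_eqVlt; apply/orP; left; apply/eqP; rewrite /s; field; lra.
Qed.

End Count2.

Section MM.
Variables (F : finFieldType).
Local Notation q := (#|F|%:R : RR).

Definition U (f : F * F -> RR) c d := \sum_a f (a, c) * f (a, d).

Lemma Mf_eq f : Mform f f f f = (q ^+ 4)^-1 * \sum_c \sum_d U f c d ^+ 2.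
Proof.
rewrite /Mform /qq; congr (_ * _); symmetry.
rewrite [RHS]swap4; apply eq_bigr => c _; apply eq_bigr => d _.
rewrite expr2 /U sum_mul; apply eq_bigr => a _; apply eq_bigr => b _; ring.
Qed.

Lemma qpos' : 0 < q.
Proof. by rewrite ltr0n; apply/card_gt0P; exists 0. Qed.

Lemma M4 (f1 f2 f3 f4 : F * F -> RR) :
  (forall x, -1 <= f2 x <= 1) -> (forall x, -1 <= f3 x <= 1) ->
  (forall x, -1 <= f4 x <= 1) ->
  Mform f1 f2 f3 f4 ^+ 4 <= Mform f1 f1 f1 f1.
Proof.
move=> h2 h3 h4.
have q0 := qpos'.
rewrite Mf_eq /Mform /qq.
set P := \sum_a \sum_b \sum_c \sum_d f1 (a, c) * f2 (a, d) * f3 (b, c) * f4 (b, d).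
pose X a b := \sum_c f1 (a, c) * f3 (b, c).
pose Y a b := \sum_d f2 (a, d) * f4 (b, d).
have eP : P = \sum_a \sum_b X a b * Y a b.
  rewrite /P; apply eq_bigr => a _; apply eq_bigr => b _.
  rewrite sum_mul; apply eq_bigr => c _; apply eq_bigr => d _; ring.
have eX : \sum_a \sum_b X a b ^+ 2 = \sum_c \sum_d U f1 c d * U f3 c d.
  transitivity (\sum_a \sum_b \sum_c \sum_d
     (f1 (a, c) * f3 (b, c)) * (f1 (a, d) * f3 (b, d))).
    by apply eq_bigr => a _; apply eq_bigr => b _; rewrite expr2 sum_mul.
  rewrite swap4; apply eq_bigr => c _; apply eq_bigr => d _.
  rewrite /U sum_mul; apply eq_bigr => a _; apply eq_bigr => b _; ring.
have hY : \sum_a \sum_b Y a b ^+ 2 <= q ^+ 2 * q ^+ 2.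
  rewrite -(sum2c F); apply: ler_sum => a _; apply: ler_sum => b _.
  apply: sq_le; apply: sumbd => d; apply: bd_norm; exact: prod_bd.
have hU3 : \sum_c \sum_d U f3 c d ^+ 2 <= q ^+ 2 * q ^+ 2.
  rewrite -(sum2c F); apply: ler_sum => a _; apply: ler_sum => b _.
  apply: sq_le; apply: sumbd => d; apply: bd_norm; exact: prod_bd.
set X2 := \sum_a \sum_b X a b ^+ 2 in eX *.
set U1s := \sum_c \sum_d U f1 c d ^+ 2.
have X20 : 0 <= X2 by apply: sumr_ge0 => a _; apply: sumr_ge0 => b _; apply: sqr_ge0.
have U10 : 0 <= U1s by apply: sumr_ge0 => a _; apply: sumr_ge0 => b _; apply: sqr_ge0.
have hP2 : P ^+ 2 <= X2 * (q ^+ 2 * q ^+ 2).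
  rewrite eP; apply: le_trans (CS2 X Y) _; apply: ler_wpM2l => //.
have hX2 : X2 ^+ 2 <= U1s * (q ^+ 2 * q ^+ 2).
  rewrite eX; apply: le_trans (CS2 (U f1) (U f3)) _; apply: ler_wpM2l => //.
have hP4 : P ^+ 4 <= U1s * q ^+ 12.
  have -> : P ^+ 4 = P ^+ 2 * P ^+ 2 by rewrite -exprD.
  apply: le_trans (ler_pM (sqr_ge0 _) (sqr_ge0 _) hP2 hP2) _.
  have -> : X2 * (q ^+ 2 * q ^+ 2) * (X2 * (q ^+ 2 * q ^+ 2)) = X2 ^+ 2 * q ^+ 8 by ring.
  have -> : U1s * q ^+ 12 = (U1s * (q ^+ 2 * q ^+ 2)) * q ^+ 8 by ring.
  by apply: ler_wpM2r => //; rewrite exprn_ge0 // ltW.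
rewrite exprMn.
have c0 : 0 <= (q ^+ 4)^-1 ^+ 4 by rewrite exprn_ge0 // invr_ge0 exprn_ge0 // ltW.
apply: le_trans (ler_wpM2l c0 hP4) _.
rewrite le_eqVlt; apply/orP; left; apply/eqP; field; lra.
Qed.

Lemma Msym1 (f1 f2 f3 f4 : F * F -> RR) : Mform f1 f2 f3 f4 = Mform f2 f1 f4 f3.
Proof.
rewrite /Mform; congr (_ * _); apply eq_bigr => a _; apply eq_bigr => b _.
rewrite exchange_big; apply eq_bigr => c _; apply eq_bigr => d _; ring.
Qed.

Lemma Msym2 (f1 f2 f3 f4 : F * F -> RR) : Mform f1 f2 f3 f4 = Mform f3 f4 f1 f2.
Proof.
rewrite /Mform; congr (_ * _); rewrite exchange_big; apply eq_bigr => a _; apply eq_bigr => b _.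
apply eq_bigr => c _; apply eq_bigr => d _; ring.
Qed.

Lemma Mf_ge0 (f : F * F -> RR) : 0 <= Mform f f f f.
Proof.
rewrite Mf_eq; apply: mulr_ge0; first by rewrite invr_ge0 exprn_ge0 // ltW // qpos'.
by apply: sumr_ge0 => a _; apply: sumr_ge0 => b _; apply: sqr_ge0.
Qed.

Lemma Mbox (f1 f2 f3 f4 : F * F -> RR) :
  (forall x, -1 <= f2 x <= 1) -> (forall x, -1 <= f3 x <= 1) ->
  (forall x, -1 <= f4 x <= 1) ->
  `|Mform f1 f2 f3 f4| <= boxnorm f1.
Proof.
move=> h2 h3 h4.
have h := M4 f1 h2 h3 h4.
set M := Mform f1 f2 f3 f4 in h *.
have e : `|M| = (`|M| ^+ 4) `^ (4%:R^-1).
  rewrite -powR_mulrn ?normr_ge0 // -powRrM mulfV ?powRr1 ?normr_ge0 //.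
  by rewrite pnatr_eq0.
rewrite e /boxnorm; apply: ge0_ler_powR.
- by rewrite invr_ge0 ler0n.
- by rewrite nnegrE exprn_ge0 ?normr_ge0.
- by rewrite nnegrE Mf_ge0.
have -> : `|M| ^+ 4 = M ^+ 4.
  by rewrite -[4%N]/(2 * 2)%N !exprM real_normK ?num_real.
exact: h.
Qed.

End MM.

Lemma err_bound (q n : RR) : 1 <= q -> 0 < n -> powR q (2%:R / 3%:R) <= n ->
  Num.sqrt q / n <= powR q (8%:R^-1) / powR n (4%:R^-1).
Proof.
move=> q1 n0 hA.
have q0 : 0 < q by lra.
set b := powR q (8%:R^-1); set a := powR n (4%:R^-1).
have b0 : 0 < b by apply: powR_gt0.
have a0 : 0 < a by apply: powR_gt0.
have hs : Num.sqrt q = b ^+ 4.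
  rewrite /b -powR_mulrn ?powR_ge0 // -powRrM -powR12_sqrt ?ltW //.
  by congr (_ `^ _); field.
have hn : n = a ^+ 4.
  rewrite /a -powR_mulrn ?powR_ge0 // -powRrM mulVf ?powRr1 ?ltW //.
  by rewrite pnatr_eq0.
have hq : powR q (2%:R^-1) <= n.
  apply: le_trans hA; apply: ler_powR => //; lra.
have hba : b <= a.
  have -> : b = powR (powR q (2%:R^-1)) (4%:R^-1).
    by rewrite /b -powRrM; congr (_ `^ _); field.
  apply: ge0_ler_powR => //; first by rewrite invr_ge0 ler0n.
    by rewrite nnegrE powR_ge0.
  by rewrite nnegrE ltW.
rewrite hs {1}hn -expr_div_n.
set t := b / a.
have t0 : 0 <= t by rewrite divr_ge0 // ltW.
have t1 : t <= 1 by rewrite /t ler_pdivrMr // mul1r.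
have -> : t ^+ 4 = t * t ^+ 3 by rewrite -exprS.
by apply: ler_piMr => //; apply: exprn_ile1.
Qed.

Theorem lemma3p4 :
  exists C : RR, 0 < C /\
  forall (F : finFieldType) (A : {group {unit F}}),
    (#|F| %% 4 = 3)%N ->
    powR (#|F|%:R : RR) (2%:R / 3%:R) <= (#|A|)%:R ->
    forall f1 f2 f3 f4 : F * F -> RR,
      (forall x, -1 <= f1 x <= 1) -> (forall x, -1 <= f2 x <= 1) ->
      (forall x, -1 <= f3 x <= 1) -> (forall x, -1 <= f4 x <= 1) ->
      `|Nform A f1 f2 f3 f4| <=
        Num.min (Num.min (boxnorm f1) (boxnorm f2)) (Num.min (boxnorm f3) (boxnorm f4))
        + C * (powR (#|F|%:R : RR) (8%:R^-1) / powR (#|A|%:R : RR) (4%:R^-1)).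
Proof.
exists 2; split; first lra.
move=> F A _ hA f1 f2 f3 f4 h1 h2 h3 h4.
have hNM := NM_close A h1 h2 h3 h4.
have hq1 : (1 <= #|F|)%N by apply/card_gt0P; exists 0.
have hE' := err_bound (n := #|A|%:R) (q := #|F|%:R) _ (npos A) hA.
set E := powR _ _ / powR _ _ in hE' *.
have {hE'} hE : Num.sqrt (#|F|%:R : RR) / #|A|%:R <= E by apply: hE'; rewrite ler1n.
set N := Nform A f1 f2 f3 f4 in hNM *.
set M := Mform f1 f2 f3 f4 in hNM.
have hT : `|N| <= `|M| + `|N - M|.
  by have := ler_normD M (N - M); rewrite addrC subrK.
have b1 : `|M| <= boxnorm f1 by apply: Mbox.
have b2 : `|M| <= boxnorm f2 by rewrite /M Msym1; apply: Mbox.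
have b3 : `|M| <= boxnorm f3 by rewrite /M Msym2; apply: Mbox.
have b4 : `|M| <= boxnorm f4 by rewrite /M Msym2 Msym1; apply: Mbox.
move: hNM; rewrite mulr2n => hNM.
rewrite -lerBlDr !le_min.
apply/andP; split; apply/andP; split; lra.
Qed.
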